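(* Let $K\ge2$, let the ground-truth clusters $\mathcal{C}_1,\dots,\mathcal{C}_K$ have size $N/K$ each, let $\mathcal{R}$ satisfy Assumption 1, and let $1\ge p\ge q\ge r\ge s\ge0$. Define $\tilde{\mathcal{A}}\in\mathbb{R}^{N\times N}$ by $\tilde{\mathcal{A}}_{ii}=p$ and, for $i\neq j$, $\tilde{\mathcal{A}}_{ij}=p$ if $\pi(v_i)=\pi(v_j)$, $R_{ij}=1$; $q$ if $\pi(v_i)\neq\pi(v_j)$, $R_{ij}=1$; $r$ if $\pi(v_i)=\pi(v_j)$, $R_{ij}=0$; $s$ if $\pi(v_i)\neq\pi(v_j)$, $R_{ij}=0$. With $\mathbf{u}_1,\dots,\mathbf{u}_{K-1}$ defined by $u_{ki}=1$ if $v_i\in\mathcal{C}_k$ and $u_{ki}=-\frac1{K-1}$ otherwise, we have $$\tilde{\mathcal{A}}\mathbf{1}=\lambda_1\mathbf{1},\quad \lambda_1=qd+s(N-d)+(p-q)\frac dK+(r-s)\frac{N-d}K,$$ and, for each $k\in[K-1]$, $\tilde{\mathcal{A}}\mathbf{u}_k=\lambda_{1+k}\mathbf{u}_k$ with $\lambda_{1+k}=(p-q)\frac dK+(r-s)\frac{N-d}K$.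
   Context: $\mathcal{V}=\{v_1,\dots,v_N\}$, $\pi:\mathcal{V}\to[K]$ with $\mathcal{C}_k=\{v_i:\pi(v_i)=k\}$. $\mathcal{R}$ is an undirected graph on $\mathcal{V}$ with symmetric adjacency $\mathbf{R}\in\{0,1\}^{N\times N}$. Assumption 1: $\mathcal{R}$ is $d$-regular for some $K\le d\le N$, $R_{ii}=1$ for all $i$ (self-loops counted in the degree), and each node is adjacent in $\mathcal{R}$ to exactly $d/K$ nodes of $\mathcal{C}_k$ for every $k\in[K]$ (including the self-loop). $\mathbf{1}$ is the all-ones vector. (The matrix $\tilde{\mathcal{A}}$ equals $\mathbb{E}[\mathbf{A}]+p\mathbf{I}$ for $\mathbf{A}$ drawn from the representation-aware SBM with these parameters.) *)

(* Defs.v *)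
From HB Require Import structures.
From mathcomp Require Import all_boot all_order all_algebra.
Set Implicit Arguments. Unset Strict Implicit. Unset Printing Implicit Defensive.
Import Order.TTheory GRing.Theory Num.Theory.
Local Open Scope ring_scope.

(* Nodes are 'I_N, clusters are 'I_K (0-indexed), pi : 'I_N -> 'I_K,
   Radj : rel 'I_N is the adjacency relation of the representation graph. *)

Definition assumption1 (N K d : nat) (pi : 'I_N -> 'I_K) (Radj : rel 'I_N) : Prop :=
  [/\ (K <= d <= N)%N,
      (forall i j, Radj i j = Radj j i),
      (forall i, Radj i i),
      (forall i, #|[set j | Radj i j]| = d)
    & (forall i (k : 'I_K), (#|[set j | Radj i j && (pi j == k)]| * K)%N = d)].

(* The expected adjacency matrix plus p I, as defined entrywise in the paper. *)
Definition Atilde (F : pzRingType) (N K : nat) (pi : 'I_N -> 'I_K) (Radj : rel 'I_N)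
    (p q r s : F) : 'M[F]_N :=
  \matrix_(i, j)
    if i == j then p
    else if Radj i j then (if pi i == pi j then p else q)
    else (if pi i == pi j then r else s).

Definition uvec (F : fieldType) (N K : nat) (pi : 'I_N -> 'I_K) (k : 'I_K) : 'cV[F]_N :=
  \col_i (if pi i == k then 1 else - (K.-1%:R)^-1).

(* Main.v *)
Require Import Defs.
From HB Require Import structures.
From mathcomp Require Import all_boot all_order all_algebra.
From mathcomp Require Import ring.
Import Order.TTheory GRing.Theory Num.Theory.
Local Open Scope ring_scope.

Lemma sum_const_card (F : pzRingType) n (P : pred 'I_n) (c:F) :
  \sum_(j | P j) c = #|[set j | P j]|%:R * c.
Proof. by rewrite sumr_const cardsE mulr_natl. Qed.

Lemma Srow (F : realFieldType) (N K d : nat) (pi : 'I_N -> 'I_K)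
    (Radj : rel 'I_N) (p q r s : F) :
  (forall k : 'I_K, (#|[set i | pi i == k]| * K)%N = N) ->
  assumption1 d pi Radj -> (0 < K)%N ->
  forall i k,
  \sum_j Atilde pi Radj p q r s i j * (pi j == k)%:R =
  if pi i == k then p * (d%:R / K%:R) + r * ((N - d)%:R / K%:R)
  else q * (d%:R / K%:R) + s * ((N - d)%:R / K%:R).
Proof.
move=> hC [/andP[_ hdN] hsym hrefl hdeg hcl] K0 i k.
have KF : (K%:R : F) != 0 by rewrite pnatr_eq0 -lt0n.
set c1n := #|[set j | Radj i j && (pi j == k)]|.
set c2n := #|[set j | (pi j == k) && ~~ Radj i j]|.
have e1 : (c1n%:R : F) = d%:R / K%:R.
  by rewrite -(hcl i k) natrM mulfK.
have e12 : (c1n + c2n)%N = #|[set j | pi j == k]|.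
  rewrite -(cardsID [set j | Radj i j] [set j | pi j == k]); congr (_ + _)%N.
    by apply: eq_card => j; rewrite !inE andbC.
  by apply: eq_card => j; rewrite !inE andbC.
have e2 : (c2n%:R : F) = (N - d)%:R / K%:R.
  have -> : (N - d)%N = (c2n * K)%N.
    by rewrite -(hcl i k) -{1}(hC k) -e12 mulnDl addKn.
  by rewrite natrM mulfK.
rewrite -e1 -e2.
rewrite (bigID (fun j => pi j == k)) /= [X in _ + X]big1 ?addr0; last first.
  by move=> j /negbTE ->; rewrite mulr0.
rewrite (bigID (fun j => Radj i j)) /=.
under eq_bigr => j /andP[/eqP hj _] do rewrite hj eqxx mulr1 mxE.
under [X in _ + X]eq_bigr => j /andP[/eqP hj _] do rewrite hj eqxx mulr1 mxE.
case: ifP => hik.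
  rewrite (eq_bigr (fun _ => p)); last first.
    move=> j /andP[/eqP hj ->]; rewrite (eqP hik) hj eqxx; by case: (i == j).
  rewrite [X in _ + X](eq_bigr (fun _ => r)); last first.
    move=> j /andP[/eqP hj hR]; rewrite (eqP hik) hj eqxx (negbTE hR).
    case: eqP => // eij; by rewrite eij hrefl in hR.
  rewrite !sum_const_card (mulrC p) (mulrC r); congr (_%:R * _ + _%:R * _) => //.
  by apply: eq_card => j; rewrite !inE andbC.
rewrite (eq_bigr (fun _ => q)); last first.
  move=> j /andP[/eqP hj ->]; rewrite hj hik; case: eqP => // eij.
  by rewrite eij hj eqxx in hik.
rewrite [X in _ + X](eq_bigr (fun _ => s)); last first.
  move=> j /andP[/eqP hj hR]; rewrite hj hik (negbTE hR).
  case: eqP => // eij; by rewrite eij hj eqxx in hik.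
rewrite !sum_const_card (mulrC q) (mulrC s); congr (_%:R * _ + _%:R * _) => //.
by apply: eq_card => j; rewrite !inE andbC.
Qed.

Lemma rowsum (F : realFieldType) (N K d : nat) (pi : 'I_N -> 'I_K)
    (Radj : rel 'I_N) (p q r s : F) :
  (forall k : 'I_K, (#|[set i | pi i == k]| * K)%N = N) ->
  assumption1 d pi Radj -> (0 < K)%N ->
  forall i,
  \sum_j Atilde pi Radj p q r s i j =
  q * d%:R + s * (N - d)%:R + (p - q) * (d%:R / K%:R)
              + (r - s) * ((N - d)%:R / K%:R).
Proof.
move=> hC hA K0 i.
have h1 : forall j, \sum_(k < K) (pi j == k)%:R = 1 :> F.
  move=> j; rewrite (bigD1 (pi j)) //= eqxx big1 ?addr0 // => k hk.
  by rewrite eq_sym (negbTE hk).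
rewrite (eq_bigr (fun j => Atilde pi Radj p q r s i j * \sum_(k < K) (pi j == k)%:R));
  last by move=> j _; rewrite h1 mulr1.
under eq_bigr => j _ do rewrite mulr_sumr.
rewrite exchange_big /=.
under eq_bigr => k _ do rewrite (@Srow F N K d pi Radj p q r s hC hA K0).
rewrite (bigD1 (pi i)) //= eqxx.
rewrite (eq_bigr (fun _ => q * (d%:R / K%:R) + s * ((N - d)%:R / K%:R))); last first.
  by move=> k hk; rewrite eq_sym (negbTE hk).
rewrite sum_const_card.
have -> : #|[set k | k != pi i]| = K.-1.
  have := cardsC1 (pi i); rewrite card_ord => <-; by apply: eq_card => k; rewrite !inE.
have hK : (K%:R : F) = K.-1%:R + 1 by rewrite natr1 prednK.
rewrite hK; field.
by rewrite -hK pnatr_eq0 -lt0n.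
Qed.

Theorem lemma4 (F : realFieldType) (N K d : nat) (pi : 'I_N -> 'I_K)
    (Radj : rel 'I_N) (p q r s : F) :
  (2 <= K)%N ->
  (forall k : 'I_K, (#|[set i | pi i == k]| * K)%N = N) ->
  assumption1 d pi Radj ->
  s >= 0 -> r >= s -> q >= r -> p >= q -> 1 >= p ->
  let A := Atilde pi Radj p q r s in
  let lam1 := q * d%:R + s * (N - d)%:R + (p - q) * (d%:R / K%:R)
              + (r - s) * ((N - d)%:R / K%:R) in
  let lamk := (p - q) * (d%:R / K%:R) + (r - s) * ((N - d)%:R / K%:R) in
  A *m (const_mx 1 : 'cV[F]_N) = lam1 *: (const_mx 1 : 'cV[F]_N) /\
  (forall k : 'I_K, (k < K.-1)%N -> A *m uvec F pi k = lamk *: uvec F pi k).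
Proof.
move=> K2 hC hA _ _ _ _ _ A lam1 lamk.
have K0 : (0 < K)%N by apply: leq_trans K2.
split.
  apply/matrixP => i j; rewrite mxE (eq_bigr (fun j => A i j));
    last by move=> l _; rewrite [const_mx _ _ _]mxE mulr1.
  by rewrite /A (@rowsum F N K d pi Radj p q r s hC hA K0) !mxE mulr1.
move=> k _; apply/matrixP => i j.
set a := (K.-1%:R : F)^-1.
rewrite mxE (eq_bigr (fun l => (1 + a) * (A i l * (pi l == k)%:R) - a * A i l)); last first.
  move=> l _; rewrite /uvec [X in _ * X]mxE /a; case: (pi l == k) => /=; ring.
rewrite sumrB -!mulr_sumr /A (@Srow F N K d pi Radj p q r s hC hA K0) (@rowsum F N K d pi Radj p q r s hC hA K0) /uvec !mxE.
have hK : (K%:R : F) = K.-1%:R + 1 by rewrite natr1 prednK.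
have k1 : (K.-1%:R : F) != 0 by rewrite pnatr_eq0 -lt0n -ltnS prednK.
rewrite /lamk /a hK; case: (pi i == k); field; rewrite ?k1 ?andbT //=;
  by rewrite -hK pnatr_eq0 -lt0n.
Qed.
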